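(* Let $a,b,c\ge 0$ and $r\ge 0$. The diversity-multiplexing tradeoff of the full-duplex $(a,b,c)$-relay channel, which in the high-SNR limit is given by $$d_{f.d.}(r)=\min\Big\{a+b+c-\alpha-\beta-\gamma \;:\; \min\big(\max(\alpha,\gamma),\max(\beta,\gamma)\big)\le r,\ 0\le\alpha\le a,\ 0\le\beta\le b,\ 0\le\gamma\le c\Big\},$$ equals $$d_{f.d.}(r)=\big(\min(a,b)-r\big)^{+}+(c-r)^{+},$$ where $x^+=\max(x,0)$.
   Context: The $(a,b,c)$-relay channel: a source $S$ communicates with a destination $D$ with the help of a relay $R$; the source signal is broadcast to $R$ and $D$, and the source and relay signals superpose at $D$. The channel gains $h_{sr},h_{rd},h_{sd}$ of the S-R, R-D, S-D links are i.i.d. circularly-symmetric complex Gaussian $\mathcal{CN}(0,1)$, quasi-static (constant over a codeword, independent across codewords), known only at the receivers (CSIR, no CSIT). The average SNRs of the S-R, R-D, S-D links are $\rho^a,\rho^b,\rho^c$ respectively, $a,b,c\ge 0$. A code family with rate $R$ and error probability $P_e$ achieves multiplexing gain $r=\lim_{\rho\to\infty} R/\log\rho$ and diversity $d=-\lim_{\rho\to\infty}\log P_e/\log\rho$; the DMT $d(r)$ is the supremum of achievable diversity at multiplexing gain $r$. The exponential orders are $\alpha=\lim_{\rho\to\infty}\frac{\log(1+|h_{sr}|^2\rho^a)}{\log\rho}$, and similarly $\beta,\gamma$ for $|h_{rd}|^2\rho^b$ and $|h_{sd}|^2\rho^c$. In the full-duplex case the relay can transmit and receive simultaneously, and (via a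 constant-gap capacity approximation) the outage event at multiplexing gain $r$ is $\{\min(\max(\alpha,\gamma),\max(\beta,\gamma))\le r\}$, which gives the optimization formula in the claim. *)

(* Defs.v *)
From Stdlib Require Import Reals.
Open Scope R_scope.

Definition pos_part (x : R) : R := Rmax x 0.

Definition fd_feasible (a b c r al be ga : R) : Prop :=
  Rmin (Rmax al ga) (Rmax be ga) <= r /\
  0 <= al <= a /\ 0 <= be <= b /\ 0 <= ga <= c.

Definition fd_obj (a b c al be ga : R) : R := a + b + c - al - be - ga.

Definition is_fd_dmt (a b c r d : R) : Prop :=
  (exists al be ga, fd_feasible a b c r al be ga /\ fd_obj a b c al be ga = d) /\
  (forall al be ga, fd_feasible a b c r al be ga -> d <= fd_obj a b c al be ga).

(* Main.v *)
Require Import Defs.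
From Stdlib Require Import Reals Lra.
Open Scope R_scope.

Theorem lemma1 (a b c r : R) (ha : 0 <= a) (hb : 0 <= b) (hc : 0 <= c) (hr : 0 <= r) :
  is_fd_dmt a b c r (pos_part (Rmin a b - r) + pos_part (c - r)).
Proof.
  unfold is_fd_dmt, fd_feasible, fd_obj, pos_part.
  split.
  - destruct (Rle_dec a b).
    + exists (Rmin a r), b, (Rmin c r).
      unfold Rmin, Rmax in *;
      repeat destruct Rle_dec; split; try split; try split; try split; lra.
    + exists a, (Rmin b r), (Rmin c r).
      unfold Rmin, Rmax in *;
      repeat destruct Rle_dec; split; try split; try split; try split; lra.
  - intros al be ga [H [H1 [H2 H3]]].
    unfold Rmin, Rmax in *; repeat destruct Rle_dec; lra.
Qed.
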